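(* Let $\varphi_1(m,n)=(2m+n-1)/3$ and $\varphi_2(m,n)=(m+2n-2)/3$, and for a 4-tuple set $\varphi_i(a,b,c,d)=\varphi_i(a+b,c+d)$ and $\varphi_i(T)=\varphi_i(\lambda(T))$ for a tree $T$. Then: (i) If $\lambda(T)=(a,b,c,d)$ for a tree $T$, then $2m+n\equiv 1\pmod 3$, where $m=a+b$ and $n=c+d$. (ii) Every tree $T$ has exactly $\varphi_1(T)$ vertices of color $\alpha$, $\varphi_1(T)$ vertices of color $\beta$, $\varphi_2(T)$ vertices of color $\gamma$, and $\varphi_2(T)+1$ vertices of color $1$. (iii) In any nontrivial tree $T$, $\alpha^\#\le\varphi_1(T)$, $\beta^\#\le\varphi_1(T)$, $\gamma^\#\le\varphi_2(T)$ and $1^\#\le\varphi_2(T)$. (iv) A 4-tuple $(a,b,c,d)$ of nonnegative integers different from $(0,0,0,1)$ is representable iff $2a+2b+c+d\equiv1\pmod 3$, $a\le\varphi_1(a,b,c,d)$, $b\le\varphi_1(a,b,c,d)$, $c\le\varphi_2(a,b,c,d)$ and $d\le\varphi_2(a,b,c,d)$.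
   Context: A tree is a full binary tree: a finite rooted tree in which every non-leaf vertex has exactly two children, a left child and a right child; the trivial tree has one vertex. Let $\mathbf{KL}=\{1,\alpha,\beta,\gamma\}$ be the Klein 4-group ($\alpha^2=\beta^2=1$, $\alpha\beta=\gamma$). The vertices of a tree are colored by elements of $\mathbf{KL}$: the root has color $1$, a left child has $\alpha$ times the color of its parent, and a right child has $\beta$ times the color of its parent. For $g\in\mathbf{KL}$, $g^\#$ denotes the number of leaves of color $g$, and the total color of $T$ is $\lambda(T)=(\alpha^\#,\beta^\#,\gamma^\#,1^\#)$. A 4-tuple of natural numbers is representable if it equals $\lambda(T)$ for some tree $T$. *)

(* Defs.v *)
From HB Require Import structures.
From mathcomp Require Import all_boot all_order all_algebra.
Set Implicit Arguments. Unset Strict Implicit. Unset Printing Implicit Defensive.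
Import Order.TTheory GRing.Theory Num.Theory.

Inductive tree : Type := Leaf | Node of tree & tree.

Inductive KL : Type := K1 | Kalpha | Kbeta | Kgamma.

Definition KL_eqb (x y : KL) : bool :=
  match x, y with
  | K1, K1 | Kalpha, Kalpha | Kbeta, Kbeta | Kgamma, Kgamma => true
  | _, _ => false end.

Definition klmul (x y : KL) : KL :=
  match x, y with
  | K1, z | z, K1 => z
  | Kalpha, Kalpha | Kbeta, Kbeta | Kgamma, Kgamma => K1
  | Kalpha, Kbeta | Kbeta, Kalpha => Kgamma
  | Kalpha, Kgamma | Kgamma, Kalpha => Kbeta
  | Kbeta, Kgamma | Kgamma, Kbeta => Kalpha
  end.

Fixpoint leaves_col (g c : KL) (T : tree) : nat :=
  match T with
  | Leaf => if KL_eqb g c then 1 else 0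
  | Node l r => leaves_col g (klmul Kalpha c) l + leaves_col g (klmul Kbeta c) r
  end.

Fixpoint verts_col (g c : KL) (T : tree) : nat :=
  (if KL_eqb g c then 1 else 0) +
  match T with
  | Leaf => 0
  | Node l r => verts_col g (klmul Kalpha c) l + verts_col g (klmul Kbeta c) r
  end.

Definition nleaves (g : KL) (T : tree) : nat := leaves_col g K1 T.
Definition nverts (g : KL) (T : tree) : nat := verts_col g K1 T.

Definition lambda (T : tree) : nat * nat * nat * nat :=
  (nleaves Kalpha T, nleaves Kbeta T, nleaves Kgamma T, nleaves K1 T).

Definition representable (t : nat * nat * nat * nat) : Prop :=
  exists T : tree, lambda T = t.

Definition phi1 (m n : nat) : rat := ((2 * m + n)%:R - 1) / 3.
Definition phi2 (m n : nat) : rat := ((m + 2 * n)%:R - 2) / 3.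

Definition phi1_4 (t : nat * nat * nat * nat) : rat :=
  let: (a, b, c, d) := t in phi1 (a + b) (c + d).
Definition phi2_4 (t : nat * nat * nat * nat) : rat :=
  let: (a, b, c, d) := t in phi2 (a + b) (c + d).

Definition phi1T (T : tree) : rat := phi1_4 (lambda T).
Definition phi2T (T : tree) : rat := phi2_4 (lambda T).

(* Main.v *)
Require Import Defs.
From HB Require Import structures.
From mathcomp Require Import all_boot all_order all_algebra.
From mathcomp Require Import ring lra zify.
Import Order.TTheory GRing.Theory Num.Theory.
Local Open Scope ring_scope.

Lemma phi_eq (V k j : nat) : (3*V+j = k)%N -> (k%:R - j%:R)/3 = V%:R :> rat.
Proof. move<-. rewrite natrD natrM. by field. Qed.

Lemma phi_le (x k j : nat) : ((x%:R : rat) <= (k%:R - j%:R)/3) <-> (3*x + j <= k)%N.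
Proof.
rewrite ler_pdivlMr // lerBrDr -(ler_nat rat). rewrite natrD natrM mulrC. done.
Qed.

Lemma key T : forall c,
  [/\ (3 * verts_col (klmul Kalpha c) c T + 1 =
        2 * (leaves_col (klmul Kalpha c) c T + leaves_col (klmul Kbeta c) c T)
        + (leaves_col (klmul Kgamma c) c T + leaves_col c c T))%N,
      (3 * verts_col (klmul Kbeta c) c T + 1 =
        2 * (leaves_col (klmul Kalpha c) c T + leaves_col (klmul Kbeta c) c T)
        + (leaves_col (klmul Kgamma c) c T + leaves_col c c T))%N,
      (3 * verts_col (klmul Kgamma c) c T + 2 =
        (leaves_col (klmul Kalpha c) c T + leaves_col (klmul Kbeta c) c T)
        + 2 * (leaves_col (klmul Kgamma c) c T + leaves_col c c T))%N &
      (3 * verts_col c c T =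
        (leaves_col (klmul Kalpha c) c T + leaves_col (klmul Kbeta c) c T)
        + 2 * (leaves_col (klmul Kgamma c) c T + leaves_col c c T) + 1)%N].
Proof.
elim: T => [|l IHl r IHr] c.
  by case: c; simpl.
move: (IHl K1) (IHl Kalpha) (IHl Kbeta) (IHl Kgamma)
      (IHr K1) (IHr Kalpha) (IHr Kbeta) (IHr Kgamma).
case: c; simpl => [] [? ? ? ?] [? ? ? ?] [? ? ? ?] [? ? ? ?]
  [? ? ? ?] [? ? ? ?] [? ? ? ?] [? ? ? ?]; split; lia.
Qed.

Lemma leaves_le g c T : (leaves_col g c T <= verts_col g c T)%N.
Proof.
elim: T c => [|l IHl r IHr] c; first by rewrite /=; case: KL_eqb.
move: (IHl (klmul Kalpha c)) (IHr (klmul Kbeta c)).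
case: c => /=; case: KL_eqb; lia.
Qed.

Lemma leaves_lt_node c l r : (leaves_col c c (Node l r) < verts_col c c (Node l r))%N.
Proof.
move: (leaves_le c (klmul Kalpha c) l) (leaves_le c (klmul Kbeta c) r).
case: c => /=; lia.
Qed.

Lemma expand g T : forall c, (0 < leaves_col g c T)%N -> exists T', forall h,
  (leaves_col h c T' + (if KL_eqb h g then 1 else 0) =
   leaves_col h c T + (if KL_eqb h (klmul Kalpha g) then 1 else 0)
    + (if KL_eqb h (klmul Kbeta g) then 1 else 0))%N.
Proof.
elim: T => [|l IHl r IHr] c.
  have E : KL_eqb g c -> g = c by case: g; case: c.
  rewrite /=; case: (KL_eqb g c) E => // /(_ isT) -> _.
  exists (Node Leaf Leaf) => h; case: h; case: c => /=; lia.
move=> Hpos.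
have {}Hpos : (0 < leaves_col g (klmul Kalpha c) l + leaves_col g (klmul Kbeta c) r)%N by [].
case: (posnP (leaves_col g (klmul Kalpha c) l)) => Hl.
  have [T' HT'] : exists T', forall h,
     (leaves_col h (klmul Kbeta c) T' + (if KL_eqb h g then 1 else 0) =
     leaves_col h (klmul Kbeta c) r + (if KL_eqb h (klmul Kalpha g) then 1 else 0)
      + (if KL_eqb h (klmul Kbeta g) then 1 else 0))%N.
    apply: IHr; lia.
  exists (Node l T') => h; move: (HT' h).
  have -> : leaves_col h c (Node l T') = (leaves_col h (klmul Kalpha c) l + leaves_col h (klmul Kbeta c) T')%N by [].
  have -> : leaves_col h c (Node l r) = (leaves_col h (klmul Kalpha c) l + leaves_col h (klmul Kbeta c) r)%N by [].
  lia.
have [T' HT'] := IHl _ Hl.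
exists (Node T' r) => h; move: (HT' h).
have -> : leaves_col h c (Node T' r) = (leaves_col h (klmul Kalpha c) T' + leaves_col h (klmul Kbeta c) r)%N by [].
have -> : leaves_col h c (Node l r) = (leaves_col h (klmul Kalpha c) l + leaves_col h (klmul Kbeta c) r)%N by [].
lia.
Qed.

Lemma phi1_eq V m n : (3*V+1 = 2 * m+n)%N -> phi1 m n = V%:R.
Proof. by rewrite /phi1 => <-; rewrite natrD natrM; field. Qed.
Lemma phi2_eq V m n : (3*V+2 = m+2* n)%N -> phi2 m n = V%:R.
Proof. by rewrite /phi2 => <-; rewrite natrD natrM; field. Qed.
Lemma phi2_eq1 W m n : (3*W = m+2* n+1)%N -> phi2 m n + 1 = W%:R.
Proof.
rewrite /phi2 => H.
have -> : (W%:R : rat) = ((m + 2* n + 1)%N%:R)/3 by rewrite -H natrM; field.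
by rewrite natrD; field.
Qed.
Lemma phi1_le x m n : ((x%:R : rat) <= phi1 m n) <-> (3*x+1 <= 2 * m+n)%N.
Proof.
rewrite /phi1 ler_pdivlMr // lerBrDr -(ler_nat rat).
rewrite natrD natrM; split => ?; lra.
Qed.
Lemma phi2_le x m n : ((x%:R : rat) <= phi2 m n) <-> (3*x+2 <= m+2* n)%N.
Proof.
rewrite /phi2 ler_pdivlMr // lerBrDr -(ler_nat rat).
rewrite natrD natrM; split => ?; lra.
Qed.

Definition condsN (a b c d : nat) : Prop :=
  [/\ ((2 * a + 2 * b + c + d) %% 3 = 1)%N,
      (3*a+1 <= 2*(a+b)+(c+d))%N, (3*b+1 <= 2*(a+b)+(c+d))%N,
      (3*c+2 <= (a+b)+2*(c+d))%N & (3*d+2 <= (a+b)+2*(c+d))%N].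

Lemma step a b c d : condsN a b c d -> ~ (a = 1 /\ b = 1 /\ c = 0 /\ d = 0)%N ->
 [/\ (0<a)%N, (0<b)%N & condsN (a-1) (b-1) c d.+1] \/
 [/\ (0<a)%N, (0<b)%N & condsN (a-1) (b-1) c.+1 d] \/
 [/\ (0<c)%N, (0<d)%N & condsN a.+1 b (c-1) (d-1)] \/
 [/\ (0<c)%N, (0<d)%N & condsN a b.+1 (c-1) (d-1)].
Proof.
rewrite /condsN => -[H0 H1 H2 H3 H4] Hn.
case: (boolP [&& (0<a)%N, (0<b)%N & (3*d+5 <= a+b+2*c+2*d)%N]) => hA.
  by left; move/and3P: hA => [? ? ?]; split => //; split; lia.
case: (boolP [&& (0<a)%N, (0<b)%N & (3*c+5 <= a+b+2*c+2*d)%N]) => hD.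
  by right; left; move/and3P: hD => [? ? ?]; split => //; split; lia.
case: (boolP [&& (0<c)%N, (0<d)%N & (3*a+4 <= 2*a+2*b+c+d)%N]) => hB.
  by right; right; left; move/and3P: hB => [? ? ?]; split => //; split; lia.
case: (boolP [&& (0<c)%N, (0<d)%N & (3*b+4 <= 2*a+2*b+c+d)%N]) => hC.
  by right; right; right; move/and3P: hC => [? ? ?]; split => //; split; lia.
exfalso.
move: hA hD hB hC; rewrite !negb_and -!ltnNge.
case: (posnP a) => Ha; case: (posnP b) => Hb; case: (posnP c) => Hc;
  case: (posnP d) => Hd /=; lia.
Qed.

Lemma expand1 g T : (0 < nleaves g T)%N -> exists T', forall h,
  (nleaves h T' + (if KL_eqb h g then 1 else 0) =
   nleaves h T + (if KL_eqb h (klmul Kalpha g) then 1 else 0)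
    + (if KL_eqb h (klmul Kbeta g) then 1 else 0))%N.
Proof. exact: expand. Qed.

Lemma lamE T a b c d : lambda T = (a, b, c, d) ->
  [/\ nleaves Kalpha T = a, nleaves Kbeta T = b, nleaves Kgamma T = c & nleaves K1 T = d].
Proof. by rewrite /lambda => -[-> -> -> ->]. Qed.

Lemma backward n : forall a b c d, (a + b + c + d <= n)%N -> condsN a b c d ->
  representable (a, b, c, d).
Proof.
elim: n => [|n IH] a b c d Hs Hc.
  case: Hc => H0 _ _ _ _.
  have Ez : (2 * a + 2 * b + c + d = 0)%N by lia.
  by rewrite Ez in H0.
case: (boolP [&& a == 1%N, b == 1%N, c == 0%N & d == 0%N]).
  by case/and4P => /eqP -> /eqP -> /eqP -> /eqP ->; exists (Node Leaf Leaf).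
move=> Hne.
have Hne' : ~ (a = 1 /\ b = 1 /\ c = 0 /\ d = 0)%N.
  by move=> [Ea [Eb [Ec Ed]]]; move: Hne; rewrite Ea Eb Ec Ed.
case: (step _ _ _ _ Hc Hne') => [[Ha Hb Hc']|[[Ha Hb Hc']|[[Ha Hb Hc']|[Ha Hb Hc']]]].
- have [T /lamE [E1 E2 E3 E4]] := IH (a-1)%N (b-1)%N c d.+1 ltac:(lia) Hc'.
  have [T' HT'] := expand1 K1 T ltac:(lia).
  exists T'; move: (HT' Kalpha) (HT' Kbeta) (HT' Kgamma) (HT' K1) => /=.
  rewrite E1 E2 E3 E4 /lambda => *; congr (_, _, _, _); lia.
- have [T /lamE [E1 E2 E3 E4]] := IH (a-1)%N (b-1)%N c.+1 d ltac:(lia) Hc'.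
  have [T' HT'] := expand1 Kgamma T ltac:(lia).
  exists T'; move: (HT' Kalpha) (HT' Kbeta) (HT' Kgamma) (HT' K1) => /=.
  rewrite E1 E2 E3 E4 /lambda => *; congr (_, _, _, _); lia.
- have [T /lamE [E1 E2 E3 E4]] := IH a.+1 b (c-1)%N (d-1)%N ltac:(lia) Hc'.
  have [T' HT'] := expand1 Kalpha T ltac:(lia).
  exists T'; move: (HT' Kalpha) (HT' Kbeta) (HT' Kgamma) (HT' K1) => /=.
  rewrite E1 E2 E3 E4 /lambda => *; congr (_, _, _, _); lia.
- have [T /lamE [E1 E2 E3 E4]] := IH a b.+1 (c-1)%N (d-1)%N ltac:(lia) Hc'.
  have [T' HT'] := expand1 Kbeta T ltac:(lia).
  exists T'; move: (HT' Kalpha) (HT' Kbeta) (HT' Kgamma) (HT' K1) => /=.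
  rewrite E1 E2 E3 E4 /lambda => *; congr (_, _, _, _); lia.
Qed.

Lemma part_i (T : tree) (a b c d : nat) : lambda T = (a, b, c, d) ->
  ((2 * (a + b) + (c + d)) %% 3 = 1)%N.
Proof.
move=> /lamE [E1 E2 E3 E4]; case: (key T K1) => /= k1 _ _ _.
move: E1 E2 E3 E4; rewrite /nleaves => E1 E2 E3 E4; lia.
Qed.

Lemma part_ii (T : tree) :
     (nverts Kalpha T)%:R = phi1T T /\
     (nverts Kbeta T)%:R = phi1T T /\
     (nverts Kgamma T)%:R = phi2T T /\
     (nverts K1 T)%:R = phi2T T + 1.
Proof.
case: (key T K1) => /= k1 k2 k3 k4.
rewrite /phi1T /phi2T /lambda /phi1_4 /phi2_4 /nleaves /nverts.
split; first by symmetry; apply: phi1_eq; lia.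
split; first by symmetry; apply: phi1_eq; lia.
split; first by symmetry; apply: phi2_eq; lia.
by symmetry; apply: phi2_eq1; lia.
Qed.

Lemma part_iii_gen (T : tree) :
  (leaves_col K1 K1 T < verts_col K1 K1 T)%N ->
     (nleaves Kalpha T)%:R <= phi1T T /\
     (nleaves Kbeta T)%:R <= phi1T T /\
     (nleaves Kgamma T)%:R <= phi2T T /\
     (nleaves K1 T)%:R <= phi2T T.
Proof.
move=> Hlt.
case: (key T K1) => /= k1 k2 k3 k4.
have l1 := leaves_le Kalpha K1 T.
have l2 := leaves_le Kbeta K1 T.
have l3 := leaves_le Kgamma K1 T.
rewrite /phi1T /phi2T /lambda /phi1_4 /phi2_4 /nleaves.
split; first by apply/phi1_le; lia.
split; first by apply/phi1_le; lia.
split; first by apply/phi2_le; lia.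
by apply/phi2_le; lia.
Qed.

Theorem theorem4p1 :
  (* (i) *)
  (forall (T : tree) (a b c d : nat), lambda T = (a, b, c, d) ->
     ((2 * (a + b) + (c + d)) %% 3 = 1)%N)
  /\
  (* (ii) *)
  (forall T : tree,
     (nverts Kalpha T)%:R = phi1T T /\
     (nverts Kbeta T)%:R = phi1T T /\
     (nverts Kgamma T)%:R = phi2T T /\
     (nverts K1 T)%:R = phi2T T + 1)
  /\
  (* (iii) *)
  (forall T1 T2 : tree, let T := Node T1 T2 in
     (nleaves Kalpha T)%:R <= phi1T T /\
     (nleaves Kbeta T)%:R <= phi1T T /\
     (nleaves Kgamma T)%:R <= phi2T T /\
     (nleaves K1 T)%:R <= phi2T T)
  /\
  (* (iv) *)
  (forall a b c d : nat, (a, b, c, d) <> (0, 0, 0, 1)%N ->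
     (representable (a, b, c, d) <->
       [/\ ((2 * a + 2 * b + c + d) %% 3 = 1)%N,
           a%:R <= phi1_4 (a, b, c, d),
           b%:R <= phi1_4 (a, b, c, d),
           c%:R <= phi2_4 (a, b, c, d) &
           d%:R <= phi2_4 (a, b, c, d)])).
Proof.
split; first exact: part_i.
split; first exact: part_ii.
split.
  move=> T1 T2; exact (part_iii_gen _ (leaves_lt_node K1 T1 T2)).
move=> a b c d Hne; split.
  move=> [[|T1 T2] HT]; first by case: Hne; rewrite -HT.
  have hm := part_i _ _ _ _ _ HT.
  have [E1 E2 E3 E4] := lamE _ _ _ _ _ HT.
  have := part_iii_gen _ (leaves_lt_node K1 T1 T2).
  rewrite /phi1T /phi2T HT E1 E2 E3 E4 => -[h1 [h2 [h3 h4]]].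
  split => //; lia.
move=> [H0 H1 H2 H3 H4].
apply: (backward (a+b+c+d) a b c d (leqnn _)).
have := proj1 (phi1_le a (a+b) (c+d)) H1.
have := proj1 (phi1_le b (a+b) (c+d)) H2.
have := proj1 (phi2_le c (a+b) (c+d)) H3.
have := proj1 (phi2_le d (a+b) (c+d)) H4.
by move=> *; split.
Qed.
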